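(* Let $D_K$ be a relative $K$-entropy satisfying Properties (a), (b), (c) and (d) below, and let $H_K$ be the associated conditional entropy, defined by one of the two forms below. Then (i) $H_K(A|B)=0$ for every state of the form $\rho_{AB}=|\psi\rangle\langle\psi|_A\otimes\rho_B$ with $|\psi\rangle$ a unit vector; and (ii) $H_K(A|B)\le\log d_A$ for every density operator $\rho_{AB}$, where $d_A=\dim\mathcal{H}_A$.
   Context: All Hilbert spaces are finite-dimensional; $\log$ has an arbitrary but fixed base. A relative $K$-entropy $D_K$ assigns to every pair $(S,T)$ of positive semidefinite operators on a common Hilbert space an extended real number $D_K(S\|T)$. Properties: (a) for every trace-preserving completely positive map $\mathcal{E}$ (possibly between different spaces), $D_K(\mathcal{E}(S)\|\mathcal{E}(T))\le D_K(S\|T)$; (b) for positive semidefinite $S,T$ on $\mathcal{H}$ and $T'$ on $\mathcal{H}'$, $D_K(S\oplus 0\,\|\,T\oplus T')=D_K(S\|T)$; (c) for every constant $c>0$, $D_K(S\|cT)=D_K(S\|T)+\log\frac1c$; (d) $D_K(\rho\|\rho)=0$ for every density operator $\rho$. The conditional $K$-entropy of a density operator $\rho_{AB}$ is either $H_K(A|B)=-D_K(\rho_{AB}\|\mathbb{1}_A\otimes\rho_B)$ for all $\rho_{AB}$, or $H_K(A|B)=\max_{\sigma_B}[-D_K(\rho_{AB}\|\mathbb{1}_A\otimes\sigma_B)]$ for all $\rho_{AB}$, maximum over density operators $\sigma_B$. *)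

(* Defs.v *)
From HB Require Import structures.
From mathcomp Require Import all_boot all_order all_algebra.
From mathcomp Require Import all_classical all_reals.
From mathcomp Require Import ereal exp.
From mathcomp Require Import complex mxtens.
Set Implicit Arguments. Unset Strict Implicit. Unset Printing Implicit Defensive.
Import Order.TTheory GRing.Theory Num.Theory.
Local Open Scope ring_scope.

Section QDefs.
Variable R : realType.
Local Notation C := R[i].

Definition adj (m n : nat) (A : 'M[C]_(m, n)) : 'M[C]_(n, m) :=
  (map_mx Num.conj A)^T.

Definition psd (n : nat) (A : 'M[C]_n) : Prop :=
  adj A = A /\ forall v : 'cV[C]_n, 0 <= (adj v *m A *m v) 0 0.

Definition density (n : nat) (rho : 'M[C]_n) : Prop := psd rho /\ \tr rho = 1.

(* partial trace over the first tensor factor (A) of C^dA (x) C^dB,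
   tensor indices encoded as in mxtens (Kronecker product [tensmx]) *)
Definition ptraceA (dA dB : nat) (X : 'M[C]_(dA * dB)) : 'M[C]_dB :=
  \matrix_(b, b') \sum_(a < dA) X (mxtens_index (a, b)) (mxtens_index (a, b')).

(* id_k (x) E, acting on 'M_(k * n) *)
Definition ampl (k n m : nat) (E : 'M[C]_n -> 'M[C]_m) (X : 'M[C]_(k * n))
  : 'M[C]_(k * m) :=
  \matrix_(i, j) E (\matrix_(a, b) X (mxtens_index ((mxtens_unindex i).1, a))
                                     (mxtens_index ((mxtens_unindex j).1, b)))
                   (mxtens_unindex i).2 (mxtens_unindex j).2.

Definition CPTP (n m : nat) (E : 'M[C]_n -> 'M[C]_m) : Prop :=
  [/\ (forall (c : C) (X Y : 'M[C]_n), E (c *: X + Y) = c *: E X + E Y),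
      (forall X : 'M[C]_n, \tr (E X) = \tr X) &
      (forall (k : nat) (X : 'M[C]_(k * n)), psd X -> psd (ampl E X))].

Definition logb (b x : R) : R := ln x / ln b.

Definition relent := forall n : nat, 'M[C]_n -> 'M[C]_n -> \bar R.

Definition is_rel_K_entropy (b : R) (D : relent) : Prop :=
  [/\
      (forall (n m : nat) (E : 'M[C]_n -> 'M[C]_m) (S T : 'M[C]_n),
          CPTP E -> psd S -> psd T -> (D m (E S) (E T) <= D n S T)%E),
      (forall (n m : nat) (S T : 'M[C]_n) (T' : 'M[C]_m),
          psd S -> psd T -> psd T' ->
          D (n + m)%N (block_mx S 0 0 0) (block_mx T 0 0 T') = D n S T),
      (forall (n : nat) (S T : 'M[C]_n) (c : R), psd S -> psd T -> 0 < c ->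
          D n S (real_complex R c *: T) = (D n S T + (logb b (1 / c))%:E)%E) &
      (forall (n : nat) (rho : 'M[C]_n), density rho -> D n rho rho = 0%E)].

(* conditional K-entropy; [second = false]: first form, [true]: second form *)
Definition Hcond (second : bool) (D : relent) (dA dB : nat)
  (rho : 'M[C]_(dA * dB)) : \bar R :=
  if second then
    ereal_sup [set (- D (dA * dB)%N rho (1%:M *t sigma))%E
              | sigma in [set sigma : 'M[C]_dB | density sigma]]
  else (- D (dA * dB)%N rho (1%:M *t ptraceA rho))%E.

End QDefs.

(* Main.v *)
Require Import Defs.
From HB Require Import structures.
From mathcomp Require Import all_boot all_order all_algebra.
From mathcomp Require Import all_classical all_reals.
From mathcomp Require Import ereal exp.
From mathcomp Require Import complex mxtens.
Import Order.TTheory GRing.Theory Num.Theory.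
Local Open Scope ring_scope.
Set Implicit Arguments. Unset Strict Implicit. Unset Printing Implicit Defensive.
Section S.
Variable R : realType.
Local Notation C := R[i].
Local Notation cj := (@Num.conj C).

Lemma adjE m n (A : 'M[C]_(m,n)) i j : adj A i j = cj (A j i).
Proof. by rewrite !mxE. Qed.

Lemma adjK m n (A : 'M[C]_(m,n)) : adj (adj A) = A.
Proof. by apply/matrixP=> i j; rewrite !adjE conjCK. Qed.

Lemma adj_mul m n p (A : 'M[C]_(m,n)) (B : 'M[C]_(n,p)) :
  adj (A *m B) = adj B *m adj A.
Proof.
apply/matrixP=> i j; rewrite adjE !mxE rmorph_sum; apply: eq_bigr=> k _.
by rewrite !adjE rmorphM mulrC.
Qed.

Lemma adjD m n (A B : 'M[C]_(m,n)) : adj (A + B) = adj A + adj B.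
Proof. by apply/matrixP=> i j; rewrite !mxE rmorphD. Qed.

Lemma adjN m n (A : 'M[C]_(m,n)) : adj (- A) = - adj A.
Proof. by apply/matrixP=> i j; rewrite !mxE rmorphN. Qed.

Lemma adj0 m n : adj (0 : 'M[C]_(m,n)) = 0.
Proof. by apply/matrixP=> i j; rewrite !mxE rmorph0. Qed.

Lemma adjZ m n c (A : 'M[C]_(m,n)) : adj (c *: A) = cj c *: adj A.
Proof. by apply/matrixP=> i j; rewrite !mxE rmorphM. Qed.

Lemma adj_scalar n (c : C) : adj (c%:M : 'M_n) = (cj c)%:M.
Proof.
apply/matrixP=> i j; rewrite !mxE eq_sym; case: (i == j); 
by rewrite ?mulr1n ?mulr0n ?rmorph0.
Qed.

Lemma adj1 n : adj (1%:M : 'M[C]_n) = 1%:M.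
Proof. by rewrite adj_scalar rmorph1. Qed.

Lemma adj_sum (I : finType) m n (F : I -> 'M[C]_(m,n)) :
  adj (\sum_i F i) = \sum_i adj (F i).
Proof.
apply/matrixP=> i j; rewrite adjE !summxE rmorph_sum; apply: eq_bigr=> k _.
by rewrite !mxE.
Qed.

Lemma adj_col m1 m2 n (A : 'M[C]_(m1,n)) (B : 'M[C]_(m2,n)) :
  adj (col_mx A B) = row_mx (adj A) (adj B).
Proof. by rewrite /adj map_col_mx tr_col_mx. Qed.

Lemma adj_row m n1 n2 (A : 'M[C]_(m,n1)) (B : 'M[C]_(m,n2)) :
  adj (row_mx A B) = col_mx (adj A) (adj B).
Proof. by rewrite /adj map_row_mx tr_row_mx. Qed.

Lemma adj_tens m n p q (A : 'M[C]_(m,n)) (B : 'M[C]_(p,q)) :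
  adj (A *t B) = adj A *t adj B.
Proof. by rewrite /adj map_mxT trmx_tens. Qed.

Lemma adj_mul_ge0 n (v : 'cV[C]_n) : 0 <= (adj v *m v) 0 0.
Proof.
rewrite !mxE; apply: sumr_ge0=> i _; rewrite !mxE mulrC; exact: mul_conjC_ge0.
Qed.

Lemma psd0 n : psd (0 : 'M[C]_n).
Proof. split; first exact: adj0. by move=> v; rewrite mulmx0 mul0mx mxE. Qed.

Lemma psdD n (A B : 'M[C]_n) : psd A -> psd B -> psd (A + B).
Proof.
move=> [hA pA] [hB pB]; split; first by rewrite adjD hA hB.
by move=> v; rewrite mulmxDr mulmxDl mxE addr_ge0.
Qed.

Lemma psd_sum (I : finType) n (F : I -> 'M[C]_n) :
  (forall i, psd (F i)) -> psd (\sum_i F i).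
Proof.
move=> h; apply: (big_ind (fun X => psd X)) => //; [exact: psd0 | exact: psdD].
Qed.

Lemma conj_ge0 (c : C) : 0 <= c -> cj c = c.
Proof. by move=> h; apply/CrealP; rewrite realE h. Qed.

Lemma psdZ n (c : C) (A : 'M[C]_n) : 0 <= c -> psd A -> psd (c *: A).
Proof.
move=> hc [hA pA]; split; first by rewrite adjZ hA conj_ge0.
by move=> v; rewrite -scalemxAr -scalemxAl mxE mulr_ge0.
Qed.

Lemma psd_conj m n (M : 'M[C]_(m,n)) (X : 'M[C]_n) :
  psd X -> psd (M *m X *m adj M).
Proof.
move=> [hX pX]; split; first by rewrite !adj_mul adjK hX mulmxA.
move=> v; have := pX (adj M *m v); rewrite adj_mul adjK !mulmxA //.
Qed.

Lemma psd1 n : psd (1%:M : 'M[C]_n).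
Proof. by split; [exact: adj1 | move=> v; rewrite mulmx1 adj_mul_ge0]. Qed.

Lemma psd_scalar n (c : C) : 0 <= c -> psd (c%:M : 'M_n).
Proof. by move=> hc; rewrite -scalemx1; apply: psdZ => //; apply: psd1. Qed.
Local Notation idx := (@mxtens_index _ _).

Lemma sum_idx k n (F : 'I_(k * n) -> C) :
  \sum_Q F Q = \sum_(a < k) \sum_(b < n) F (idx (a, b)).
Proof.
rewrite pair_big /=.
rewrite (reindex (@mxtens_index k n)) /=; last first.
  by exists (@mxtens_unindex k n) => x _; [rewrite mxtens_indexK | rewrite mxtens_unindexK].
by apply: eq_bigr => -[a b].
Qed.

Lemma sum_delta k (i : 'I_k) (F : 'I_k -> C) :
  \sum_a ((i == a)%:R * F a) = F i.
Proof.
rewrite (bigD1 i) //= eqxx mul1r big1 ?addr0 // => a /negbTE.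
by rewrite eq_sym => ->; rewrite mul0r.
Qed.

Lemma sum_delta' k (i : 'I_k) (F : 'I_k -> C) :
  \sum_a (F a * (a == i)%:R) = F i.
Proof.
rewrite -[RHS](sum_delta i); apply: eq_bigr => a _; by rewrite mulrC eq_sym.
Qed.

Definition blk k n (X : 'M[C]_(k * n)) (i j : 'I_k) : 'M[C]_n :=
  \matrix_(a, b) X (idx (i, a)) (idx (j, b)).

Lemma tens1_conjE k m n (K : 'M[C]_(m,n)) (X : 'M[C]_(k * n)) i1 i2 j1 j2 :
  ((1%:M *t K) *m X *m adj (1%:M *t K)) (idx (i1, i2)) (idx (j1, j2))
  = (K *m blk X i1 j1 *m adj K) i2 j2.
Proof.
rewrite mxE sum_idx mxE (bigD1 j1) //= [X in _ + X]big1 ?addr0; last first.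
  move=> a ha; apply: big1 => c _.
  by rewrite adjE tensmxE !mxE eq_sym (negbTE ha) mulr0n mul0r rmorph0 mulr0.
apply: eq_bigr => b _.
rewrite !adjE tensmxE !mxE eqxx mulr1n mul1r; congr (_ * _).
rewrite sum_idx (bigD1 i1) //= [X in _ + X]big1 ?addr0; last first.
  move=> a ha; apply: big1 => c' _.
  by rewrite tensmxE !mxE eq_sym (negbTE ha) mulr0n !mul0r.
apply: eq_bigr => c' _.
by rewrite tensmxE !mxE eqxx mulr1n mul1r.
Qed.
Definition kmap (I : finType) m n (w : I -> C) (K : I -> 'M[C]_(m,n))
  (X : 'M[C]_n) : 'M[C]_m := \sum_i w i *: (K i *m X *m adj (K i)).

Lemma kmap_lin (I : finType) m n (w : I -> C) (K : I -> 'M[C]_(m,n)) c X Y :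
  kmap w K (c *: X + Y) = c *: kmap w K X + kmap w K Y.
Proof.
rewrite /kmap scaler_sumr -big_split /=; apply: eq_bigr => i _.
by rewrite mulmxDr mulmxDl -!scalemxAr -!scalemxAl scalerDr !scalerA mulrC.
Qed.

Lemma kmap_psd (I : finType) m n (w : I -> C) (K : I -> 'M[C]_(m,n)) X :
  (forall i, 0 <= w i) -> psd X -> psd (kmap w K X).
Proof.
move=> hw hX; apply: psd_sum => i; apply: psdZ => //; exact: psd_conj.
Qed.

Lemma kmap_tr (I : finType) m n (w : I -> C) (K : I -> 'M[C]_(m,n)) X :
  \sum_i w i *: (adj (K i) *m K i) = 1%:M -> \tr (kmap w K X) = \tr X.
Proof.
move=> h; rewrite /kmap raddf_sum /=.
transitivity (\tr ((\sum_i w i *: (adj (K i) *m K i)) *m X)); last first.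
  by rewrite h mul1mx.
rewrite mulmx_suml raddf_sum /=; apply: eq_bigr => i _.
  by rewrite mxtraceZ -scalemxAl mxtraceZ mxtrace_mulC mulmxA.
Qed.

Lemma ampl_kmap (I : finType) k m n (w : I -> C) (K : I -> 'M[C]_(m,n))
  (X : 'M[C]_(k * n)) :
  ampl (kmap w K) X = kmap w (fun i => (1%:M : 'M_k) *t K i) X.
Proof.
apply/matrixP => i j.
case: (mxtens_indexP i) => i1 i2; case: (mxtens_indexP j) => j1 j2.
rewrite mxE !mxtens_indexK /= /kmap !summxE; apply: eq_bigr => l _.
rewrite [in RHS]mxE tens1_conjE [in LHS]mxE; congr (_ * _).
Qed.

Lemma CPTP_kmap (I : finType) m n (w : I -> C) (K : I -> 'M[C]_(m,n)) :
  (forall i, 0 <= w i) -> \sum_i w i *: (adj (K i) *m K i) = 1%:M ->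
  CPTP (kmap w K).
Proof.
move=> hw h; split.
- exact: kmap_lin.
- move=> X; exact: kmap_tr.
- by move=> k X hX; rewrite ampl_kmap; apply: kmap_psd.
Qed.
Definition Ktr n (i : 'I_n) : 'M[C]_(1, n) := delta_mx 0 i.

Lemma adj_delta m n (i : 'I_m) (j : 'I_n) : adj (delta_mx i j : 'M[C]_(m,n)) = delta_mx j i.
Proof.
apply/matrixP => a b; rewrite adjE !mxE andbC.
by case: (_ && _); rewrite ?rmorph1 ?rmorph0.
Qed.

Lemma sum_delta_diag n : \sum_(i < n) (delta_mx i i : 'M[C]_n) = 1%:M.
Proof.
apply/matrixP => a b; rewrite summxE (bigD1 a) //= [X in _ + X]big1 ?addr0.
  by rewrite !mxE eqxx /= eq_sym.
by move=> i hi; rewrite !mxE eq_sym (negbTE hi).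
Qed.

Lemma Ktr_TP n : \sum_i (fun _ => (1 : C)) i *: (adj (@Ktr n i) *m Ktr i) = 1%:M.
Proof.
rewrite -sum_delta_diag; apply: eq_bigr => i _.
by rewrite scale1r adj_delta mul_delta_mx.
Qed.

Lemma CPTP_Ktr n : CPTP (kmap (fun _ => (1 : C)) (@Ktr n)).
Proof. by apply: CPTP_kmap; [move=> i; exact: ler01 | exact: Ktr_TP]. Qed.

Lemma kmap_KtrE n (X : 'M[C]_n) : kmap (fun _ => 1) (@Ktr n) X = (\tr X)%:M.
Proof.
apply/matrixP => a b; rewrite [a]ord1 [b]ord1 summxE !mxE /mxtrace.
apply: eq_bigr => i _; rewrite scale1r /Ktr adj_delta -rowE -colE !mxE //.
Qed.

Lemma mxtrace_tens m n (A : 'M[C]_m) (B : 'M[C]_n) : \tr (A *t B) = \tr A * \tr B.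
Proof.
rewrite /mxtrace sum_idx big_distrl /=; apply: eq_bigr => a _.
by rewrite big_distrr /=; apply: eq_bigr => b _; rewrite tensmxE.
Qed.

Lemma tensDl m n p q (A B : 'M[C]_(m,n)) (Y : 'M[C]_(p,q)) :
  (A + B) *t Y = A *t Y + B *t Y.
Proof. by apply/matrixP => i j; rewrite !mxE mulrDl. Qed.

Lemma tensDr m n p q (A : 'M[C]_(m,n)) (X Y : 'M[C]_(p,q)) :
  A *t (X + Y) = A *t X + A *t Y.
Proof. by apply/matrixP => i j; rewrite !mxE mulrDr. Qed.

Lemma tensNl m n p q (A : 'M[C]_(m,n)) (Y : 'M[C]_(p,q)) :
  (- A) *t Y = - (A *t Y).
Proof. by apply/matrixP => i j; rewrite !mxE mulNr. Qed.

Lemma tensZl m n p q c (A : 'M[C]_(m,n)) (Y : 'M[C]_(p,q)) :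
  (c *: A) *t Y = c *: (A *t Y).
Proof. by apply/matrixP => i j; rewrite !mxE mulrA. Qed.

Lemma tensZr m n p q c (A : 'M[C]_(m,n)) (Y : 'M[C]_(p,q)) :
  A *t (c *: Y) = c *: (A *t Y).
Proof. by apply/matrixP => i j; rewrite !mxE mulrCA. Qed.

Lemma tens_suml (I : finType) m n p q (A : I -> 'M[C]_(m,n)) (Y : 'M[C]_(p,q)) :
  (\sum_i A i) *t Y = \sum_i (A i *t Y).
Proof.
apply/matrixP => i j; rewrite !mxE !summxE big_distrl /=.
by apply: eq_bigr => k _; rewrite !mxE.
Qed.

Definition W n m (v : 'cV[C]_n) : 'M[C]_(n * m, m) :=
  \matrix_(p, b) (v (mxtens_unindex p).1 0 * ((mxtens_unindex p).2 == b)%:R).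

Lemma W_conj n m (v : 'cV[C]_n) (Y : 'M[C]_m) :
  W m v *m Y *m adj (W m v) = (v *m adj v) *t Y.
Proof.
apply/matrixP => i j.
case: (mxtens_indexP i) => i1 i2; case: (mxtens_indexP j) => j1 j2.
rewrite tensmxE !mxE big_ord1 !mxE.
transitivity (\sum_b (v i1 0 * Y i2 b * cj (v j1 0)) * (b == j2)%:R); last first.
  by rewrite sum_delta' mulrAC.
apply: eq_bigr => b _; rewrite adjE !mxE mxtens_indexK /= rmorphM rmorph_nat.
rewrite (eq_bigr (fun c => v i1 0 * ((i2 == c)%:R * Y c b))); last first.
  by move=> c _; rewrite !mxE mxtens_indexK /= mulrA.
by rewrite -big_distrr sum_delta /= mulrA eq_sym.
Qed.

Lemma W_adjW n m (v : 'cV[C]_n) :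
  adj (W m v) *m W m v = ((adj v *m v) 0 0) *: 1%:M.
Proof.
apply/matrixP => a b; rewrite !mxE sum_idx big_distrl /=.
apply: eq_bigr => a0 _.
rewrite (eq_bigr (fun b0 => (a == b0)%:R * (cj (v a0 0) * v a0 0 * (b0 == b)%:R))).
  by rewrite sum_delta adjE.
move=> b0 _; rewrite adjE !mxE mxtens_indexK /= rmorphM rmorph_nat.
rewrite [b0 == a]eq_sym; case: (a == b0); rewrite ?mulr0 ?mul0r ?mulr1 ?mul1r //.
by rewrite mulrA.
Qed.
Lemma W_deltaE n m (a : 'I_n) a' b' b :
  W m (delta_mx a 0 : 'cV[C]_n) (idx (a', b')) b = ((a == a') && (b' == b))%:R.
Proof.
rewrite !mxE mxtens_indexK /= eqxx andbT.
by rewrite eq_sym -natrM mulnb.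
Qed.

Lemma W_blk n m (a : 'I_n) (X : 'M[C]_(n * m)) :
  adj (W m (delta_mx a 0)) *m X *m W m (delta_mx a 0) = blk X a a.
Proof.
apply/matrixP => b b'; rewrite !mxE sum_idx (bigD1 a) //= [X in _ + X]big1 ?addr0.
- rewrite (bigD1 b') //= [X in _ + X]big1 ?addr0.
  + rewrite W_deltaE !eqxx mulr1 mxE sum_idx (bigD1 a) //= [X in _ + X]big1 ?addr0.
    * rewrite (bigD1 b) //= [X in _ + X]big1 ?addr0.
        by rewrite adjE W_deltaE !eqxx rmorph1 mul1r.
      move=> c hc; rewrite adjE W_deltaE eqxx /= (negbTE hc).
      by rewrite rmorph0 mul0r.
    * move=> c hc; apply: big1 => d _; rewrite eq_sym in hc.
      by rewrite adjE W_deltaE (negbTE hc) rmorph0 mul0r.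
  + by move=> c hc; rewrite W_deltaE eqxx /= (negbTE hc) mulr0.
- move=> c hc; apply: big1 => d _; rewrite eq_sym in hc.
  by rewrite W_deltaE (negbTE hc) mulr0.
Qed.

Lemma ptraceA_kmap n m (X : 'M[C]_(n * m)) :
  ptraceA X = kmap (fun _ => 1) (fun a : 'I_n => adj (W m (delta_mx a 0))) X.
Proof.
apply/matrixP => b b'; rewrite /kmap summxE !mxE; apply: eq_bigr => a _.
by rewrite scale1r adjK W_blk !mxE.
Qed.

Lemma ptraceA_psd n m (X : 'M[C]_(n * m)) : psd X -> psd (ptraceA X).
Proof. by move=> hX; rewrite ptraceA_kmap; apply: kmap_psd => // _; exact: ler01. Qed.

Lemma ptraceA_tr n m (X : 'M[C]_(n * m)) : \tr (ptraceA X) = \tr X.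
Proof.
rewrite /mxtrace [RHS]sum_idx exchange_big /=; apply: eq_bigr => b _.
by rewrite !mxE.
Qed.

Lemma ptraceA_tens n m (A : 'M[C]_n) (Y : 'M[C]_m) :
  ptraceA (A *t Y) = \tr A *: Y.
Proof.
apply/matrixP => b b'; rewrite !mxE /mxtrace big_distrl /=.
by apply: eq_bigr => a _; rewrite tensmxE.
Qed.

Lemma delta_outer n (a : 'I_n) :
  (delta_mx a 0 : 'cV[C]_n) *m adj (delta_mx a 0) = delta_mx a a.
Proof. by rewrite adj_delta mul_delta_mx. Qed.

Lemma psd_Ptens n m (v : 'cV[C]_n) (Y : 'M[C]_m) : psd Y -> psd ((v *m adj v) *t Y).
Proof. by move=> h; rewrite -W_conj; apply: psd_conj. Qed.

Lemma psd_tens1 n m (Y : 'M[C]_m) : psd Y -> psd ((1%:M : 'M[C]_n) *t Y).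
Proof.
move=> h; rewrite -sum_delta_diag tens_suml; apply: psd_sum => a.
by rewrite -delta_outer; apply: psd_Ptens.
Qed.
Lemma block_mx00 m1 m2 n1 n2 :
  block_mx (0 : 'M[C]_(m1,n1)) (0 : 'M_(m1,n2)) (0 : 'M_(m2,n1)) (0 : 'M_(m2,n2)) = 0.
Proof. by rewrite /block_mx !row_mx0 col_mx0. Qed.

Lemma sum_blk_ul (I : finType) m1 m2 (F : I -> 'M[C]_m1) :
  \sum_i block_mx (F i) 0 0 (0 : 'M_m2) = block_mx (\sum_i F i) 0 0 0.
Proof.
symmetry; apply: (big_morph (fun M => block_mx M 0 0 (0 : 'M[C]_m2))).
  by move=> x y; rewrite add_block_mx !addr0.
exact: block_mx00.
Qed.

Lemma sum_blk_dr (I : finType) m1 m2 (F : I -> 'M[C]_m2) :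
  \sum_i block_mx (0 : 'M_m1) 0 0 (F i) = block_mx 0 0 0 (\sum_i F i).
Proof.
symmetry; apply: (big_morph (fun M => block_mx (0 : 'M[C]_m1) 0 0 M)).
  by move=> x y; rewrite add_block_mx !addr0.
exact: block_mx00.
Qed.

Definition sumK (I J : finType) m1 m2 n (K1 : I -> 'M[C]_(m1,n))
  (K2 : J -> 'M[C]_(m2,n)) (s : I + J) : 'M[C]_(m1 + m2, n) :=
  match s with inl i => col_mx (K1 i) 0 | inr j => col_mx 0 (K2 j) end.

Definition sumw (I J : finType) (w1 : I -> C) (w2 : J -> C) (s : I + J) : C :=
  match s with inl i => w1 i | inr j => w2 j end.

Lemma kmap_sum (I J : finType) m1 m2 n (w1 : I -> C) (K1 : I -> 'M[C]_(m1,n))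
  (w2 : J -> C) (K2 : J -> 'M[C]_(m2,n)) X :
  kmap (sumw w1 w2) (sumK K1 K2) X = block_mx (kmap w1 K1 X) 0 0 (kmap w2 K2 X).
Proof.
rewrite /kmap big_sumType /=.
rewrite (eq_bigr (fun i => block_mx (w1 i *: (K1 i *m X *m adj (K1 i)))
   0 0 (0 : 'M_m2))); last first.
  move=> i _; rewrite adj_col adj0 mul_col_mx mul0mx mul_col_row !mul0mx mulmx0.
  by rewrite scale_block_mx !scaler0.
rewrite [X in _ + X](eq_bigr (fun i => block_mx (0 : 'M_m1) 0 0
   (w2 i *: (K2 i *m X *m adj (K2 i))))); last first.
  move=> i _; rewrite adj_col adj0 mul_col_mx mul0mx mul_col_row !mul0mx mulmx0.
  by rewrite scale_block_mx !scaler0.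
by rewrite sum_blk_ul sum_blk_dr add_block_mx !addr0 !add0r.
Qed.

Lemma sumK_TP (I J : finType) m1 m2 n (w1 : I -> C) (K1 : I -> 'M[C]_(m1,n))
  (w2 : J -> C) (K2 : J -> 'M[C]_(m2,n)) :
  \sum_s sumw w1 w2 s *: (adj (sumK K1 K2 s) *m sumK K1 K2 s)
  = \sum_i w1 i *: (adj (K1 i) *m K1 i) + \sum_j w2 j *: (adj (K2 j) *m K2 j).
Proof.
rewrite big_sumType /=; congr (_ + _); apply: eq_bigr => i _;
by rewrite adj_col adj0 mul_row_col mul0mx ?addr0 ?add0r.
Qed.

Lemma rowK_blk1 m n1 n2 (A : 'M[C]_(m,n1)) X (Y : 'M[C]_n2) :
  row_mx A 0 *m block_mx X 0 0 Y *m adj (row_mx A 0) = A *m X *m adj A.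
Proof.
rewrite mul_row_block !mul0mx !mulmx0 !addr0 adj_row adj0 mul_row_col mul0mx.
by rewrite addr0.
Qed.

Lemma rowK_blk2 m n1 n2 (B : 'M[C]_(m,n2)) (X : 'M[C]_n1) Y :
  row_mx 0 B *m block_mx X 0 0 Y *m adj (row_mx 0 B) = B *m Y *m adj B.
Proof.
rewrite mul_row_block !mul0mx !mulmx0 !add0r adj_row adj0 mul_row_col mul0mx.
by rewrite add0r.
Qed.

Lemma rowK_TP1 m n1 n2 (A : 'M[C]_(m,n1)) :
  adj (row_mx A (0 : 'M_(m,n2))) *m row_mx A 0 = block_mx (adj A *m A) 0 0 (0 : 'M_n2).
Proof. by rewrite adj_row adj0 mul_col_row !mul0mx mulmx0. Qed.

Lemma rowK_TP2 m n1 n2 (B : 'M[C]_(m,n2)) :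
  adj (row_mx (0 : 'M_(m,n1)) B) *m row_mx 0 B = block_mx (0 : 'M_n1) 0 0 (adj B *m B).
Proof. by rewrite adj_row adj0 mul_col_row !mul0mx mulmx0. Qed.
Lemma psd_diag_ge0 n (X : 'M[C]_n) i : psd X -> 0 <= X i i.
Proof.
case=> _ h; have := h (delta_mx i 0).
by rewrite adj_delta -rowE -colE !mxE.
Qed.

Lemma psd_tr_ge0 n (X : 'M[C]_n) : psd X -> 0 <= \tr X.
Proof. by move=> h; apply: sumr_ge0 => i _; apply: psd_diag_ge0. Qed.

Lemma psd_block m1 m2 (X : 'M[C]_m1) (Y : 'M[C]_m2) :
  psd X -> psd Y -> psd (block_mx X 0 0 Y).
Proof.
move=> hX hY.
have -> : block_mx X 0 0 Y = col_mx 1%:M 0 *m X *m adj (col_mx 1%:M 0)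
                         + col_mx 0 1%:M *m Y *m adj (col_mx 0 1%:M).
  rewrite !adj_col !adj0 !adj1 !mul_col_mx !mul1mx !mul0mx !mul_mx_row.
  by rewrite !mulmx1 !mulmx0 /block_mx add_col_mx !addr0 !add0r.
by apply: psdD; apply: psd_conj.
Qed.

Lemma kmap_comp (I : finType) m n p (w : I -> C) (K : I -> 'M[C]_(m,n))
  (M : 'M[C]_(n,p)) X :
  kmap w (fun i => K i *m M) X = kmap w K (M *m X *m adj M).
Proof.
by apply: eq_bigr => i _; rewrite adj_mul !mulmxA.
Qed.

(* measurement map for a hermitian projector Q *)
Definition Mm N (Q : 'M[C]_N) :=
  kmap (sumw (fun _ : 'I_N => 1) (fun _ : 'I_N => 1))
       (sumK (fun i => Ktr i *m Q) (fun i => Ktr i *m (1%:M - Q))).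

Lemma MmE N (Q : 'M[C]_N) X :
  Mm Q X = block_mx (\tr (Q *m X *m adj Q))%:M 0 0
                    (\tr ((1%:M - Q) *m X *m adj (1%:M - Q)))%:M.
Proof. by rewrite /Mm kmap_sum !kmap_comp !kmap_KtrE. Qed.

Lemma CPTP_Mm N (Q : 'M[C]_N) : adj Q = Q -> Q *m Q = Q -> CPTP (Mm Q).
Proof.
move=> hQ QQ; apply: CPTP_kmap.
  by case=> _ /=; exact: ler01.
rewrite sumK_TP.
have H : forall M : 'M[C]_N, \sum_i (fun _ => (1 : C)) i *: (adj (Ktr i *m M) *m (Ktr i *m M))
   = adj M *m M.
  move=> M; rewrite (eq_bigr (fun i => adj M *m ((adj (Ktr i) *m Ktr i) *m M))).
    by rewrite -mulmx_sumr -mulmx_suml -(eq_bigr _ (fun i _ => scale1r _)) Ktr_TP mul1mx.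
  by move=> i _; rewrite scale1r adj_mul !mulmxA.
rewrite /= !H adjD adjN adj1 hQ QQ mulmxBl !mulmxBr !mul1mx mulmx1 QQ subrr subr0.
by rewrite addrC subrK.
Qed.
Lemma scalar0 n : (0 : C)%:M = 0 :> 'M_n.
Proof. by apply/matrixP => i j; rewrite !mxE mul0rn. Qed.

Lemma density1 : density (1%:M : 'M[C]_1).
Proof. by split; [exact: psd1 | rewrite mxtrace1]. Qed.

Variables (b : R) (D : relent R).
Hypothesis hD : is_rel_K_entropy b D.

Lemma lbQ N (Q S T : 'M[C]_N) : adj Q = Q -> Q *m Q = Q -> psd S -> psd T ->
  \tr (Q *m S *m adj Q) = 1 -> (1%:M - Q) *m S = 0 ->
  \tr (Q *m T *m adj Q) = 1 -> (0 <= @D N S T)%E.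
Proof.
move=> hQ QQ hS hT h1 h2 h3; case: hD => ha hb hc hd.
have := ha _ _ (Mm Q) S T (CPTP_Mm hQ QQ) hS hT.
rewrite !MmE h1 h2 h3 mul0mx mxtrace0 scalar0 hb.
- by rewrite hd //; exact: density1.
- exact: psd1.
- exact: psd1.
- by apply: psd_scalar; apply: psd_tr_ge0; apply: psd_conj.
Qed.
Section Proj.
Variables (n : nat) (psi : 'cV[C]_n).
Hypothesis hpsi : adj psi *m psi = 1.
Local Notation P := (psi *m adj psi).
Local Notation Pp := (1%:M - psi *m adj psi).

Lemma adjP : adj P = P.
Proof. by rewrite adj_mul adjK. Qed.

Lemma PP : P *m P = P.
Proof. by rewrite -mulmxA (mulmxA (adj psi)) hpsi mul1mx. Qed.

Lemma adjPp : adj Pp = Pp.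
Proof. by rewrite adjD adjN adj1 adjP. Qed.

Lemma PpPp : Pp *m Pp = Pp.
Proof. by rewrite mulmxBl !mulmxBr !mul1mx mulmx1 PP subrr subr0. Qed.

Lemma trP : \tr P = 1.
Proof. by rewrite mxtrace_mulC hpsi mxtrace1. Qed.

Lemma trPp : \tr Pp = n%:R - 1.
Proof. by rewrite linearB /= mxtrace1 trP. Qed.

Lemma sum_uu : \sum_(a < n) (Pp *m (delta_mx a 0 : 'cV[C]_n)) *m adj (Pp *m (delta_mx a 0 : 'cV[C]_n)) = Pp.
Proof.
transitivity (\sum_(a < n) Pp *m (delta_mx a a) *m Pp).
  by apply: eq_bigr => a _; rewrite adj_mul adjPp !mulmxA -(mulmxA _ _ (adj _)) delta_outer.
by rewrite -mulmx_suml -mulmx_sumr sum_delta_diag mulmx1 PpPp.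
Qed.

Lemma sum_uTu : \sum_(a < n) (adj (Pp *m (delta_mx a 0 : 'cV[C]_n)) *m (Pp *m (delta_mx a 0 : 'cV[C]_n))) 0 0
  = n%:R - 1.
Proof.
rewrite -trPp /mxtrace; apply: eq_bigr => a _.
by rewrite adj_mul adjPp -mulmxA (mulmxA Pp) PpPp adj_delta mulmxA -rowE -colE !mxE.
Qed.
Variable m : nat.
Hypothesis hn : (1 < n)%N.
Local Notation cc := ((n%:R - 1 : C)^-1).

Lemma nm1_neq0 : (n%:R - 1 : C) != 0.
Proof.
have -> : (n%:R - 1 : C) = (n - 1)%:R by rewrite natrB // ltnW.
by rewrite pnatr_eq0 -lt0n subn_gt0.
Qed.

Lemma nm1_ge0 : 0 <= (n%:R - 1 : C).
Proof.
have -> : (n%:R - 1 : C) = (n - 1)%:R by rewrite natrB // ltnW.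
exact: ler0n.
Qed.

Definition GK (s : 'I_1 + 'I_n) : 'M[C]_(n * m, m + m) :=
  match s with
  | inl _ => row_mx (W m psi) 0
  | inr a => row_mx 0 (W m (Pp *m delta_mx a 0))
  end.
Definition Gw (s : 'I_1 + 'I_n) : C :=
  match s with inl _ => 1 | inr _ => cc end.

Lemma GE (X Y : 'M[C]_m) : kmap Gw GK (block_mx X 0 0 Y) = P *t X + (cc *: Pp) *t Y.
Proof.
rewrite /kmap big_sumType big_ord1 /= rowK_blk1 W_conj scale1r; congr (_ + _).
transitivity (\sum_(a < n) cc *: (((Pp *m (delta_mx a 0 : 'cV[C]_n)) *m adj (Pp *m (delta_mx a 0 : 'cV[C]_n))) *t Y)).
  by apply: eq_bigr => a _; rewrite rowK_blk2 W_conj.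
by rewrite -scaler_sumr -tens_suml sum_uu tensZl.
Qed.
Lemma GK_TP : \sum_s Gw s *: (adj (GK s) *m GK s) = 1%:M.
Proof.
rewrite big_sumType big_ord1 /= rowK_TP1 W_adjW hpsi scale1r.
transitivity (block_mx (1%:M : 'M_m) 0 0 (0 : 'M_m) + \sum_(a < n) block_mx (0 : 'M_m) 0 0
  ((cc * (adj (Pp *m (delta_mx a 0 : 'cV[C]_n)) *m (Pp *m (delta_mx a 0 : 'cV[C]_n))) 0 0) *: 1%:M)).
  congr (block_mx _ _ _ _ + _); first by rewrite mxE eqxx mulr1n scale1r.
  apply: eq_bigr => a _; rewrite rowK_TP2 W_adjW scale_block_mx !scaler0 scalerA //.
rewrite sum_blk_dr -scaler_suml -mulr_sumr sum_uTu mulVf ?nm1_neq0 // scale1r.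
by rewrite add_block_mx !addr0 !add0r -scalar_mx_block.
Qed.

Lemma CPTP_G : CPTP (kmap Gw GK).
Proof.
apply: CPTP_kmap; last exact: GK_TP.
case=> [_|a] /=; first exact: ler01.
by rewrite invr_ge0 nm1_ge0.
Qed.
Lemma ubG (rB : 'M[C]_m) : density rB -> (@D (n * m)%N (P *t rB) (1%:M *t rB) <= 0)%E.
Proof.
case=> hr tr; case: hD => ha hb hc hd.
have hT : psd (block_mx rB 0 0 ((n%:R - 1) *: rB)) := psd_block hr (psdZ nm1_ge0 hr).
have hS : psd (block_mx rB 0 0 (0 : 'M_m)) := psd_block hr (psd0 _).
have := ha _ _ _ _ _ CPTP_G hS hT.
rewrite !GE tensmx0 addr0 tensZl tensZr scalerA mulVf ?nm1_neq0 // scale1r -tensDl.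
rewrite addrC subrK hb //; last exact: psdZ nm1_ge0 hr.
by rewrite hd //; split.
Qed.
End Proj.
Lemma n_pos n (psi : 'cV[C]_n) : adj psi *m psi = 1 -> (0 < n)%N.
Proof.
case: n psi => // psi h; have := congr1 (fun M : 'M[C]_1 => M 0 0) h.
by rewrite !mxE big_ord0; move/eqP; rewrite eq_sym oner_eq0.
Qed.

Lemma P1 (psi : 'cV[C]_1) : adj psi *m psi = 1 -> psi *m adj psi = 1%:M.
Proof.
move=> h; apply/matrixP => a c; rewrite [a]ord1 [c]ord1.
have := congr1 (fun M : 'M[C]_1 => M 0 0) h; rewrite /= !mxE !big_ord1; move=> <-.
by rewrite mulrC.
Qed.

Lemma density_tens1 n m (s : 'M[C]_m) : density s ->
  \tr ((1%:M : 'M[C]_n) *t s) = n%:R.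
Proof. by case=> _ h; rewrite mxtrace_tens h mxtrace1 mulr1. Qed.

Lemma lb0 n m (psi : 'cV[C]_n) (rB s : 'M[C]_m) : adj psi *m psi = 1 ->
  density rB -> density s ->
  (0 <= @D (n * m)%N ((psi *m adj psi) *t rB) (1%:M *t s))%E.
Proof.
move=> hpsi [hr tr] [hs ts].
have hQ : adj (psi *m adj psi *t (1%:M : 'M_m)) = psi *m adj psi *t 1%:M.
  by rewrite adj_tens adjP adj1.
apply: (@lbQ _ (psi *m adj psi *t 1%:M)).
- exact: hQ.
- by rewrite tensmx_mul PP // mulmx1.
- exact: psd_Ptens.
- exact: psd_tens1.
- by rewrite hQ !tensmx_mul !PP // mul1mx mulmx1 mxtrace_tens trP // tr mulr1.
- by rewrite mulmxBl mul1mx tensmx_mul PP // mul1mx subrr.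
- by rewrite hQ !tensmx_mul mulmx1 !PP // mul1mx mulmx1 mxtrace_tens trP // ts mulr1.
Qed.

Lemma Dzero n m (psi : 'cV[C]_n) (rB : 'M[C]_m) : adj psi *m psi = 1 ->
  density rB -> @D (n * m)%N ((psi *m adj psi) *t rB) (1%:M *t rB) = 0%E.
Proof.
move=> hpsi hr; apply/eqP; rewrite eq_le lb0 // andbT.
case: n psi hpsi => [|[|n]] psi hpsi.
- by have := n_pos hpsi.
- case: hD => _ _ _ hd.
  rewrite P1 // hd //; split; first by apply: psd_tens1; case: hr.
  by rewrite density_tens1.
- exact: ubG.
Qed.
Lemma npos_tr n m (rho : 'M[C]_(n * m)) : \tr rho = 1 -> (0 < n)%N.
Proof.
case: n rho => // rho; rewrite /mxtrace big_ord0.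
by move/eqP; rewrite eq_sym oner_eq0.
Qed.

Lemma lbTr n m (rho : 'M[C]_(n * m)) (s : 'M[C]_m) : density rho -> density s ->
  ((- logb b n%:R)%:E <= @D (n * m)%N rho (1%:M *t s))%E.
Proof.
move=> [hr tr] hs; have hn := npos_tr tr; case: hD => ha hb hc hd.
have hT : psd ((1%:M : 'M_n) *t s) by apply: psd_tens1; case: hs.
have := ha _ _ _ _ _ (CPTP_Ktr (n * m)) hr hT.
rewrite !kmap_KtrE tr density_tens1 //.
have -> : (n%:R : C)%:M = real_complex R (n%:R) *: (1%:M : 'M_1).
  by rewrite scalemx1 (rmorph_nat (real_complex R)).
rewrite hc ?ltr0n //; try exact: psd1.
rewrite hd; last exact: density1.
rewrite add0e.
have -> : logb b (1 / n%:R) = - logb b n%:R.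
  by rewrite /logb div1r lnV ?posrE ?ltr0n // mulNr.
by [].
Qed.
End S.
Unset Implicit Arguments.
Set Strict Implicit.

Theorem lemma9 (R : realType) (b : R) (hb0 : 0 < b) (hb1 : b != 1)
  (D : relent R) (second : bool) :
  is_rel_K_entropy b D ->
  (forall (dA dB : nat) (psi : 'cV[R[i]]_dA) (rhoB : 'M[R[i]]_dB),
      adj psi *m psi = 1 -> density rhoB ->
      Hcond second D ((psi *m adj psi) *t rhoB) = 0%E) /\
  (forall (dA dB : nat) (rho : 'M[R[i]]_(dA * dB)),
      density rho -> (Hcond second D rho <= (logb b dA%:R)%:E)%E).
Proof.
move=> hD; split.
- move=> dA dB psi rB hpsi hr.
  have hptr : ptraceA (psi *m adj psi *t rB) = rB.
    by rewrite ptraceA_tens trP // scale1r.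
  rewrite /Hcond; case: second.
  + apply/eqP; rewrite eq_le; apply/andP; split.
    * apply: ge_ereal_sup => x [s hs <-].
      by rewrite leeNl oppe0; apply: (lb0 hD).
    * apply: le_ereal_sup_tmp; exists 0%E => //.
      by exists rB => //; rewrite (Dzero hD) // oppe0.
  + by rewrite hptr (Dzero hD) // oppe0.
- move=> dA dB rho hr; rewrite /Hcond; case: second.
  + apply: ge_ereal_sup => x [s hs <-]; rewrite leeNl; exact: (lbTr hD).
  + rewrite leeNl; apply: (lbTr hD) => //; split.
    * by apply: ptraceA_psd; case: hr.
    * by rewrite ptraceA_tr; case: hr.
Qed.
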